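(* Let $X$ be a Fréchet sequence space over $\mathbb{Z}$ in which the unit sequences $(e_n)_{n\in\mathbb{Z}}$ form an unconditional basis. Let $w=(w_n)_{n\in\mathbb{Z}}$ be a sequence of non-zero scalars such that the bilateral weighted backward shift $B_w$, $B_w(x_n)_{n\in\mathbb{Z}}=(w_{n+1}x_{n+1})_{n\in\mathbb{Z}}$, is a (continuous linear) operator on $X$. If there exist $x\in X$ and a non-zero $y\in X$ such that $y$ is a limit point of the orbit $\{B_w^n x: n\geq 0\}$ (i.e. every neighbourhood of $y$ contains $B_w^n x$ for infinitely many $n\geq 0$), then $B_w$ is hypercyclic.
   Context: A Fréchet sequence space over $\mathbb{Z}$ is a Fréchet space that is a linear subspace of the space $\mathbb{K}^{\mathbb{Z}}$ of all real or complex sequences indexed by $\mathbb{Z}$, such that each coordinate functional $x=(x_n)_{n\in\mathbb{Z}}\mapsto x_k$ is continuous; $e_n=(\delta_{n,k})_{k\in\mathbb{Z}}$. An operator $T$ on $X$ is hypercyclic if there is $x\in X$ whose orbit $\{T^nx : n\geq 0\}$ is dense in $X$. *)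

(* Defs.v *)
From HB Require Import structures.
From mathcomp Require Import all_boot all_order all_algebra.
From mathcomp Require Import all_classical all_reals all_analysis.
From mathcomp Require Import finmap.
From mathcomp.real_closed Require complex.

Set Implicit Arguments.
Unset Strict Implicit.
Unset Printing Implicit Defensive.

Import Order.TTheory GRing.Theory Num.Theory.
Local Open Scope classical_set_scope.
Local Open Scope ring_scope.

(* A Fréchet space: a locally convex topological vector space (mathcomp's
   [tvsType], which is locally convex by definition) whose topology is induced
   by a complete translation-invariant metric [d]. *)
Definition frechet (R : realType) (K : numFieldType) (X : tvsType K) : Prop :=
  exists d : X -> X -> R,
    [/\
        [/\ (forall x y, 0 <= d x y),
             (forall x y, d x y = 0 <-> x = y),
             (forall x y, d x y = d y x),
             (forall x y z, d x z <= d x y + d y z) &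
             (forall x y z, d (x + z) (y + z) = d x y)],
        (forall (x : X) (U : set X),
           nbhs x U <-> exists2 e : R, 0 < e & [set y | d x y < e] `<=` U) &
        (forall u : nat -> X,
           (forall e : R, 0 < e -> exists N, forall m n, (N <= m)%N -> (N <= n)%N ->
              d (u m) (u n) < e) ->
           exists l : X, forall e : R, 0 < e -> exists N, forall n, (N <= n)%N ->
              d (u n) l < e)].

(* X is a Fréchet sequence space over Z: X is a Fréchet space identified with a
   linear subspace of K^Z through the (linear) coordinate map
   x |-> (coord n x)_{n in Z}, which is injective, and every coordinate
   functional is continuous. *)
Definition frechet_sequence_space (R : realType) (K : numFieldType)
    (X : tvsType K) (coord : int -> {linear X -> K^o}) : Prop :=
  [/\ frechet R X,
      (forall x y : X, (forall n, coord n x = coord n y) -> x = y) &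
      (forall n, continuous (coord n))].

(* The unit sequences e_n (elements of X with coord m (e n) = delta_{m,n})
   form an unconditional basis: for every x, the series sum_n x_n e_n
   converges unconditionally to x, i.e. the net of finite partial sums
   (indexed by finite subsets of Z ordered by inclusion) converges to x. *)
Definition unit_unconditional_basis (K : numFieldType) (X : tvsType K)
    (coord : int -> {linear X -> K^o}) (e : int -> X) : Prop :=
  (forall m n, coord m (e n) = (m == n)%:R) /\
  (forall x : X, forall U, nbhs x U ->
     exists F0 : {fset int}, forall F : {fset int}, fsubset F0 F ->
       U (\sum_(n <- F) coord n x *: e n)).

Definition is_bilateral_weighted_backward_shift (K : numFieldType)
    (X : tvsType K) (coord : int -> {linear X -> K^o}) (w : int -> K)
    (B : {linear X -> X}) : Prop :=
  continuous B /\ forall (x : X) (n : int), coord n (B x) = w (n + 1) * coord (n + 1) x.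

Definition hypercyclic (K : numFieldType) (X : tvsType K) (T : X -> X) : Prop :=
  exists x : X, dense (range (fun n : nat => iter n T x)).

Definition corollary3p2_stmt (R : realType) (K : numFieldType) : Prop :=
  forall (X : tvsType K) (coord : int -> {linear X -> K^o}) (e : int -> X)
         (w : int -> K) (B : {linear X -> X}),
    frechet_sequence_space R coord ->
    unit_unconditional_basis coord e ->
    (forall n, w n != 0) ->
    is_bilateral_weighted_backward_shift coord w B ->
    (exists (x y : X), y != 0 /\
       forall U, nbhs y U -> forall N : nat, exists n : nat, (N <= n)%N /\ U (iter n B x)) ->
    hypercyclic B.

(* Main.v *)
Require Import Defs.
From HB Require Import structures.
From mathcomp Require Import all_boot all_order all_algebra.
From mathcomp Require Import all_classical all_reals all_analysis.
From mathcomp Require Import finmap.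
From mathcomp.real_closed Require Import complex.
From mathcomp Require Import lra zify.
Import Order.TTheory GRing.Theory Num.Theory.
Local Open Scope classical_set_scope.
Local Open Scope ring_scope.
Import numFieldNormedType.Exports.

Lemma natfacts (n q0 r Nb0 Nb1 a : nat) : (2 * r <= q0)%N -> (q0 + Nb0 + Nb1 + a <= n)%N ->
 [/\ (r <= n)%N, (r <= q0)%N, ((n - q0 + r) + (q0 - 2 * r) = n - r)%N,
     ((n - q0 + r) + (q0 - r) = n)%N & (Nb0 + Nb1 + a <= n - q0 + r)%N].
Proof. by move=> h1 h2; split; lia. Qed.

Lemma notin_plus (F : seq int) (Nb : nat) (J : int) (m : nat) :
  (forall q, q \in F -> (absz q < Nb)%N) -> (Nb + absz J <= m)%N -> J + m%:Z \notin F.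
Proof. by move=> h hm; apply/negP => /h; lia. Qed.

Lemma notin_minus (F : seq int) (Nb : nat) (J : int) (m : nat) :
  (forall q, q \in F -> (absz q < Nb)%N) -> (Nb + absz J <= m)%N -> J - m%:Z \notin F.
Proof. by move=> h hm; apply/negP => /h; lia. Qed.


Lemma le_J (q j : int) (Nb : nat) : (absz q < Nb)%N -> q <= j + (Nb + absz j)%N%:Z.
Proof. by move=> h; lia. Qed.

Lemma absJ (q J : int) : q <= J -> q + (absz (J - q))%:Z = J.
Proof. by move=> h; lia. Qed.

Section Core.
Variables (R : realType) (K : numFieldType) (X : tvsType K).
Variable (d : X -> X -> R).
Hypothesis d_ge0 : forall x y, 0 <= d x y.
Hypothesis d_eq0 : forall x y, d x y = 0 <-> x = y.
Hypothesis d_sym : forall x y, d x y = d y x.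
Hypothesis d_tri : forall x y z, d x z <= d x y + d y z.
Hypothesis d_tr : forall x y z, d (x + z) (y + z) = d x y.
Hypothesis d_nbhs : forall (x : X) (U : set X),
           nbhs x U <-> exists2 e : R, 0 < e & [set y | d x y < e] `<=` U.

Lemma d_sub x y : d x y = d (x - y) 0.
Proof. by rewrite -(d_tr x y (- y)) subrr. Qed.

Lemma d_addl x y : d (x + y) 0 <= d x 0 + d y 0.
Proof.
apply: le_trans (d_tri _ y _) _.
by rewrite -{2}(add0r y) d_tr lerD2l.
Qed.

Lemma cont_d (f : X -> X) x : {for x, continuous f} ->
  forall eps, 0 < eps -> exists2 del, 0 < del & forall y, d x y < del -> d (f x) (f y) < eps.
Proof.
move=> cf eps eps0.
have : nbhs (f x) [set y | d (f x) y < eps] by apply/d_nbhs; exists eps.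
move=> /cf; rewrite /= nbhs_filterE => /d_nbhs [del del0 H].
by exists del => // y /H.
Qed.

Lemma cont_dK (f : X -> K^o) x : {for x, continuous f} ->
  forall eps : K, 0 < eps -> exists2 del, 0 < del & forall y, d x y < del -> `|f x - f y| < eps.
Proof.
move=> cf eps eps0.
have : nbhs (f x) (ball (f x) eps) by apply: nbhsx_ballx.
move=> /cf; rewrite /= nbhs_filterE => /d_nbhs [del del0 H].
exists del => // y /H.
Qed.


Lemma scale_at (t0 : K) (v : X) eps : 0 < eps ->
  exists2 th : K, 0 < th & exists2 rho, 0 < rho &
   forall t u, `|t0 - t| < th -> d v u < rho -> d (t0 *: v) (t *: u) < eps.
Proof.
move=> eps0.
have nU : nbhs (t0 *: v) [set y | d (t0 *: v) y < eps] by apply/d_nbhs; exists eps.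
have /= [[A1 A2] [/= nA1 nA2] HA] := scale_continuous (t0, v) _ nU.
move/nbhs_ballP: nA1 => [th th0 Hth].
move/d_nbhs: nA2 => [rho rho0 Hrho].
exists th => //; exists rho => // t u Ht Hu.
by apply: (HA (t, u)); split => //=; [apply: Hth | apply: Hrho].
Qed.


Lemma scale_fix (l : K) eps : 0 < eps ->
  exists2 del, 0 < del & forall u, d u 0 < del -> d (l *: u) 0 < eps.
Proof.
move=> /(scale_at l 0) [th th0 [rho rho0 H]].
exists rho => // u Hu; rewrite d_sym -(scaler0 _ l).
by apply: H; rewrite ?subrr ?normr0 // d_sym.
Qed.

Lemma scale_vec (v : X) (t0 : K) eps : 0 < eps ->
  exists2 th : K, 0 < th & forall t, `|t0 - t| < th -> d (t0 *: v) (t *: v) < eps.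
Proof.
move=> /(scale_at t0 v) [th th0 [rho rho0 H]].
exists th => // t Ht; apply: H => //.
by have /d_eq0 -> : v = v by [].
Qed.

Lemma scale_bal (M : K) eps : 0 < M -> 0 < eps ->
  exists2 del, 0 < del & forall t u, `|t| <= M -> d u 0 < del -> d (t *: u) 0 < eps.
Proof.
move=> M0 /(scale_at 0 0) [th th0 [rho rho0 H]].
pose l := (M + 1) / th.
have l0 : 0 < l by rewrite divr_gt0 // ltr_wpDl // ltW.
have [del del0 Hdel] := @scale_fix l rho rho0.
exists del => // t u Ht Hu.
have -> : t *: u = (t / l) *: (l *: u) by rewrite scalerA mulfVK // gt_eqF.
rewrite d_sym -(scaler0 _ 0); apply: H; last by rewrite d_sym; exact: Hdel.
rewrite sub0r normrN normf_div (gtr0_norm l0) ltr_pdivrMr // /l mulrCA divff ?gt_eqF // mulr1.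
by rewrite (le_lt_trans Ht) // ltrDl.
Qed.


Lemma d_add2 a1 a2 b1 b2 : d (a1 + a2) (b1 + b2) <= d a1 b1 + d a2 b2.
Proof.
apply: le_trans (d_tri _ (b1 + a2) _) _.
by rewrite d_tr [b1 + a2]addrC [b1 + b2]addrC d_tr.
Qed.

Lemma d_refl x : d x x = 0.
Proof. by apply/d_eq0. Qed.

Definition smallc (L : X -> X) := forall eps, 0 < eps ->
  exists2 del, 0 < del & forall u, d u 0 < del -> d (L u) 0 < eps.

Lemma smallc_comp L1 L2 : smallc L1 -> smallc L2 -> smallc (L1 \o L2).
Proof.
move=> h1 h2 eps /h1 [del1 del10 H1]; have [del2 del20 H2] := h2 _ del10.
by exists del2 => // u /H2 /H1.
Qed.

Lemma smallc_add L1 L2 : smallc L1 -> smallc L2 -> smallc (fun u => L1 u + L2 u).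
Proof.
move=> h1 h2 eps eps0; have eps20 : 0 < eps / 2 by rewrite divr_gt0.
have [del1 del10 H1] := h1 _ eps20; have [del2 del20 H2] := h2 _ eps20.
exists (Num.min del1 del2); first by rewrite lt_min del10 del20.
move=> u; rewrite lt_min => /andP [u1 u2].
apply: le_lt_trans (d_addl _ _) _.
by rewrite [eps]splitr ltrD // ?H1 ?H2.
Qed.

Lemma smallc_scale l L : smallc L -> smallc (fun u => l *: L u).
Proof.
move=> h; apply: (@smallc_comp (fun u => l *: u) L) h.
by move=> eps eps0; apply: scale_fix.
Qed.

Lemma smallc0 : smallc (fun _ => 0).
Proof. by move=> eps eps0; exists 1 => // u _; rewrite d_refl. Qed.


Variable coord : int -> {linear X -> K^o}.
Variable e : int -> X.
Variable w : int -> K.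
Variable B : {linear X -> X}.
Hypothesis coord_inj : forall x y : X, (forall n, coord n x = coord n y) -> x = y.
Hypothesis coord_cont : forall n, continuous (coord n).
Hypothesis e_coord : forall m n, coord m (e n) = (m == n)%:R.
Hypothesis basis : forall (x : X) U, nbhs x U ->
     exists F0 : {fset int}, forall F : {fset int}, fsubset F0 F ->
       U (\sum_(n <- F) coord n x *: e n).
Hypothesis w_nz : forall n, w n != 0.
Hypothesis B_cont : continuous B.
Hypothesis B_coord : forall (x : X) (n : int), coord n (B x) = w (n + 1) * coord (n + 1) x.

Definition E q (z : X) := coord q z *: e q.

Lemma coord_E p q z : coord p (E q z) = if p == q then coord q z else 0.
Proof. by rewrite /E linearZ /= e_coord; case: eqP => _; rewrite /GRing.scale /= ?mulr1 ?mulr0. Qed.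

Lemma E_add q a b : E q (a + b) = E q a + E q b.
Proof. by rewrite /E linearD scalerDl. Qed.

Lemma E_scale q (c : K) a : E q (c *: a) = c *: E q a.
Proof. by rewrite /E linearZ scalerA. Qed.

Lemma E_sub q a b : E q (a - b) = E q a - E q b.
Proof. by rewrite /E linearB scalerBl. Qed.

Fixpoint kap (q : int) (r : nat) : K :=
  if r is r'.+1 then w (q + 1) * kap (q + 1) r' else 1.

Lemma kap_nz q r : kap q r != 0.
Proof. by elim: r q => [|r IH] q /=; rewrite ?oner_neq0 // mulf_neq0. Qed.

Lemma coord_iter r q z : coord q (iter r B z) = kap q r * coord (q + r%:Z) z.
Proof.
elim: r q => [|r IH] q /=; first by rewrite addr0 mul1r.
by rewrite B_coord IH mulrA -addrA -intS.
Qed.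

Lemma iterB_add r a b : iter r B (a + b) = iter r B a + iter r B b.
Proof. by elim: r => //= r ->; rewrite linearD. Qed.

Lemma iterB_scale r (c : K) a : iter r B (c *: a) = c *: iter r B a.
Proof. by elim: r => //= r ->; rewrite linearZ. Qed.

Lemma iterB0 r : iter r B 0 = 0.
Proof. by elim: r => //= r ->; rewrite linear0. Qed.

Lemma iterB_sub r a b : iter r B (a - b) = iter r B a - iter r B b.
Proof. by rewrite -scaleN1r iterB_add iterB_scale scaleN1r. Qed.

Lemma iterB_comm r m a : iter r B (iter m B a) = iter m B (iter r B a).
Proof. by rewrite -!iterD addnC. Qed.

Lemma BE r q z : iter r B (E (q + r%:Z) z) = E q (iter r B z).
Proof.
apply: coord_inj => p; rewrite coord_iter !coord_E.
rewrite (inj_eq (addIr _)).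
case: eqP => [->|_]; last by rewrite mulr0.
by rewrite coord_iter.
Qed.

Lemma Be r q : iter r B (e (q + r%:Z)) = kap q r *: e q.
Proof.
apply: coord_inj => p; rewrite coord_iter linearZ /= !e_coord.
rewrite (inj_eq (addIr _)).
by case: eqP => [->|_]; rewrite /GRing.scale /= ?mulr0 ?mulr1.
Qed.

Lemma smallc_B : smallc B.
Proof.
move=> eps eps0; have [del del0 H] := @cont_d B 0 (B_cont 0) eps eps0.
exists del => // u Hu; rewrite d_sym -[X in d X _](linear0 B); apply: H.
by rewrite d_sym.
Qed.

Lemma smallc_iter r : smallc (iter r B).
Proof.
elim: r => [|r IH] /=; first by move=> eps eps0; exists eps.
exact: (@smallc_comp B (iter r B) smallc_B IH).
Qed.


Lemma tail z eps : 0 < eps -> exists F0 : {fset int}, forall q, q \notin F0 -> d (E q z) 0 < eps.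
Proof.
move=> eps0; have eps20 : 0 < eps / 2 by rewrite divr_gt0.
have nU : nbhs z [set y | d z y < eps / 2] by apply/d_nbhs; exists (eps / 2).
have [F0 HF] := basis _ _ nU.
exists F0 => q qF.
have H1 := HF F0 (fsubset_refl _); have H2 := HF _ (fsubsetU1 q F0).
rewrite /= big_fsetU1 //= in H2.
rewrite -(d_tr _ _ (\sum_(n <- F0) coord n z *: e n)) add0r.
apply: le_lt_trans (d_tri _ z _) _.
by rewrite [eps]splitr ltrD // d_sym.
Qed.

Lemma approxP z eps : 0 < eps -> exists F : {fset int}, d z (\sum_(n <- F) E n z) < eps.
Proof.
move=> eps0.
have nU : nbhs z [set y | d z y < eps] by apply/d_nbhs; exists eps.
have [F0 HF] := basis _ _ nU.
by exists F0; apply: HF (fsubset_refl _).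
Qed.

Lemma seq_bound (s : seq int) : exists N : nat, forall q, q \in s -> (absz q < N)%N.
Proof.
elim: s => [|a s [N HN]]; first by exists 0%N.
exists (maxn N (absz a).+1) => q; rewrite inE => /orP [/eqP ->|/HN].
  by rewrite leq_max leqnn orbT.
by move=> h; rewrite leq_max h.
Qed.

Lemma coord_nz y : y != 0 -> exists j, coord j y != 0.
Proof.
move=> y0; apply/not_existsP => H; move/eqP: y0; apply; apply: coord_inj => n.
by rewrite linear0; apply/eqP/negPn/negP; apply: H.
Qed.


Hypothesis d_compl : forall u : nat -> X,
  (forall e : R, 0 < e -> exists N, forall m n, (N <= m)%N -> (N <= n)%N -> d (u m) (u n) < e) ->
  exists l : X, forall e : R, 0 < e -> exists N, forall n, (N <= n)%N -> d (u n) l < e.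

Lemma arch_inv (eps : R) : 0 < eps -> exists k : nat, (k.+1%:R)^-1 < eps.
Proof.
move=> eps0; exists (Num.trunc eps^-1).
rewrite invf_plt ?posrE //; exact: truncnS_gt.
Qed.

Lemma baire (O : nat -> set X) :
 (forall k z, O k z -> exists2 rho, 0 < rho & forall y, d z y < rho -> O k y) ->
 (forall k z rho, 0 < rho -> exists y, d z y < rho /\ O k y) ->
 exists zeta, forall k, O k zeta.
Proof.
move=> Oopen Odense.
have step : forall kp : nat * (X * R), exists p' : X * R, 0 < kp.2.2 ->
   [/\ 0 < p'.2, p'.2 <= kp.2.2 / 4, d kp.2.1 p'.1 < kp.2.2 / 4 &
      forall y, d p'.1 y < p'.2 -> O kp.1 y].
  move=> [k [z rho]] /=.
  case: (ltP 0 rho) => rho0; last by exists (z, rho) => /=; rewrite ltNge rho0.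
  have rho40 : 0 < rho / 4 by rewrite divr_gt0.
  have [y [dy Oy]] := Odense k z _ rho40.
  have [r r0 Hr] := Oopen k y Oy.
  exists (y, Num.min r (rho / 4)) => _ /=; split => //.
  - by rewrite lt_min r0 rho40.
  - by rewrite ge_min lexx orbT.
  - by move=> u; rewrite lt_min => /andP [/Hr].
have [f Hf] := choice step.
pose sq := fix sq (k : nat) : X * R := if k is k'.+1 then f (k', sq k') else (0, 1).
have sqS k : sq k.+1 = f (k, sq k) by [].
have P1 : forall k, 0 < (sq k).2.
  by elim=> [|k IH]; [rewrite /= ltr01 | rewrite sqS; case: (Hf (k, sq k) IH)].
have P2 k : [/\ (sq k.+1).2 <= (sq k).2 / 4, d (sq k).1 (sq k.+1).1 < (sq k).2 / 4 &
      forall y, d (sq k.+1).1 y < (sq k.+1).2 -> O k y].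
  by rewrite sqS; case: (Hf (k, sq k) (P1 k)).
have P3 : forall k, (sq k).2 * (k.+1)%:R <= 1.
  elim=> [|k IH]; first by rewrite /= mulr1.
  have [h1 _ _] := P2 k; have h0 := P1 k; have h0' := P1 k.+1.
  have hk : 0 <= (k%:R : R) by [].
  have e2 : (k.+1%:R : R) = 1 + k%:R by rewrite mulrS.
  have e3 : (k.+2%:R : R) = 1 + (1 + k%:R) by rewrite !mulrS.
  rewrite e3; rewrite e2 in IH.
  move: IH h1 h0 h0' hk.
  set a := (sq k).2; set b := (sq k.+1).2; set n := (k%:R : R).
  move=> IH h1 h0 h0' hk.
  have p1 : 0 <= (a / 4 - b) * (1 + (1 + n)) by apply: mulr_ge0; lra.
  have p2 : 0 <= a * n by rewrite mulr_ge0 // ltW.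
  nra.
have P4 : forall i k, d (sq k).1 (sq (k + i)%N).1 < (sq k).2 / 2.
  elim=> [|i IH] k; first by rewrite addn0 d_refl divr_gt0.
  have [h1 h2 _] := P2 k; have := IH k.+1; rewrite addSnnS => h3.
  apply: le_lt_trans (d_tri _ (sq k.+1).1 _) _.
  have h0 := P1 k.
  move: h1 h2 h3 h0; set a := (sq k).2; set b := (sq k.+1).2.
  set x1 := d _ _; set x2 := d _ _ => h1 h2 h3 h0; lra.
have [zeta Hz] : exists zeta, forall e : R, 0 < e -> exists N, forall n, (N <= n)%N -> d (sq n).1 zeta < e.
  apply: d_compl => eps eps0.
  have [k Hk] := @arch_inv eps eps0.
  exists k => m n km kn.
  apply: le_lt_trans (d_tri _ (sq k).1 _) _.
  rewrite d_sym -(subnKC km) -(subnKC kn).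
  have h1 := P4 (m - k)%N k; have h2 := P4 (n - k)%N k.
  have h3 := P3 k; have h0 := P1 k.
  have : (sq k).2 < eps.
    apply: le_lt_trans Hk; rewrite -[leRHS]mul1r ler_pdivlMr //.
  move: h1 h2 h0; set a := (sq k).2; set x1 := d _ _; set x2 := d _ _ => h1 h2 h0 h4; lra.
exists zeta => k.
have [_ _ h] := P2 k; apply: h.
have h0 := P1 k.+1; have h20 : 0 < (sq k.+1).2 / 2 by rewrite divr_gt0.
have [N HN] := Hz _ h20.
pose n := maxn N k.+1.
have h1 := HN n (leq_maxl _ _).
have := P4 (n - k.+1)%N k.+1; rewrite subnKC ?leq_maxr // => h2.
apply: le_lt_trans (d_tri _ (sq n).1 _) _.
move: h1 h2; set a := (sq k.+1).2; set x1 := d _ _; set x2 := d _ _ => h1 h2; lra.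
Qed.


Hypothesis K_arch : forall th : K, 0 < th -> exists N : nat, (N.+1%:R)^-1 < th.

Lemma E_cont q z0 eps : 0 < eps ->
  exists2 del, 0 < del & forall z, d z0 z < del -> d (E q z0) (E q z) < eps.
Proof.
move=> /(scale_vec (e q) (coord q z0)) [th th0 Hth].
have [del del0 Hdel] := @cont_dK (coord q) z0 (coord_cont q z0) th th0.
by exists del => // z /Hdel /Hth.
Qed.

Lemma scale_cont (c : K) z0 eps : 0 < eps ->
  exists2 del, 0 < del & forall z, d z0 z < del -> d (c *: z0) (c *: z) < eps.
Proof.
move=> /(scale_fix c) [del del0 H]; exists del => // z Hz.
by rewrite d_sub -scalerBr; apply: H; rewrite -d_sub.
Qed.

Definition cN (N : nat) : K := (N.+1%:R)^-1.

Lemma cN_gt0 N : 0 < cN N.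
Proof. by rewrite /cN invr_gt0 ltr0Sn. Qed.

Lemma cN_le N N' : (N <= N')%N -> cN N' <= cN N.
Proof.
move=> h; rewrite /cN lef_pV2 ?posrE ?ltr0Sn // ler_nat ltnS //.
Qed.

Lemma cN_le1 N : `|cN N| <= 1.
Proof.
rewrite ger0_norm; last exact: ltW (cN_gt0 N).
by rewrite /cN (invf_le1 (ltr0Sn K N)) ler1n.
Qed.

Lemma bounded_E z eta : 0 < eta -> exists N, forall q, d (E q (cN N *: z)) 0 <= eta.
Proof.
move=> eta0.
have [db db0 Hb] := @scale_bal 1 eta ltr01 eta0.
have [F0 HF0] := @tail z db db0.
have fin : forall s : seq int, exists N, forall q, q \in s -> forall N', (N <= N')%N ->
    d (cN N' *: E q z) 0 < eta.
  elim=> [|q s [N HN]]; first by exists 0%N.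
  have [th th0 Hth] := @scale_vec (E q z) 0 eta eta0.
  have [Nq HNq] := K_arch _ th0.
  exists (maxn N Nq) => q'; rewrite inE => /orP [/eqP ->|qs] N'; rewrite geq_max => /andP [h1 h2].
    rewrite d_sym -[X in d X _](scale0r (E q z)); apply: Hth.
    rewrite sub0r normrN ger0_norm ?ltW ?cN_gt0 //.
    by apply: le_lt_trans HNq; apply: cN_le.
  exact: HN.
have [N HN] := fin F0.
exists N => q; rewrite E_scale.
case: (boolP (q \in F0)) => qF.
  by apply: ltW; apply: HN.
by apply: ltW; apply: Hb; [apply: cN_le1 | apply: HF0].
Qed.

Lemma EQ eps : 0 < eps ->
  exists2 del, 0 < del & forall z, d z 0 < del -> forall q, d (E q z) 0 < eps.
Proof.
move=> eps0; pose eta := eps / 3.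
have eta0 : 0 < eta by rewrite divr_gt0.
pose A N z := forall q, d (E q (cN N *: z)) 0 <= eta.
have [[N [z0 [rho rho0 Hrho]]]|nint] := pselect (exists N, exists z0, exists2 rho, 0 < rho &
     forall y, d z0 y < rho -> A N y); last first.
  pose O N := [set z | ~ A N z].
  have Oopen : forall k z, O k z -> exists2 rho, 0 < rho & forall y, d z y < rho -> O k y.
    move=> k z /= /existsNP [q /negP]; rewrite -ltNge => hq.
    have h0 : 0 < d (E q (cN k *: z)) 0 - eta by rewrite subr_gt0.
    have [del1 del10 H1] := @E_cont q (cN k *: z) _ h0.
    have [del2 del20 H2] := @scale_cont (cN k) z _ del10.
    exists del2 => // y /H2 /H1 hy hA.
    have := hA q; have := d_tri (E q (cN k *: z)) (E q (cN k *: y)) 0.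
    move: hy hq; set a := d _ _; set b := d _ _; set c := d _ _; lra.
  have Odense : forall k z rho, 0 < rho -> exists y, d z y < rho /\ O k y.
    move=> k z rho rho0; apply: contrapT => hno; apply: nint.
    exists k, z, rho => // y hy; apply: contrapT => hAy; apply: hno.
    by exists y.
  have [zeta Hz] := @baire O Oopen Odense.
  have [N HN] := @bounded_E zeta eta eta0.
  by case: (Hz N).
have N10 : (N.+1%:R : K) != 0 by rewrite pnatr_eq0.
have [del del0 Hdel] := @scale_fix (N.+1%:R) rho rho0.
exists del => // z hz q.
have hA1 : A N (z0 + N.+1%:R *: z).
  apply: Hrho; rewrite -{1}(add0r z0) [z0 + _]addrC d_tr d_sym.
  exact: Hdel.
have hA0 : A N z0 by apply: Hrho; rewrite d_refl.
have -> : E q z = E q (cN N *: (z0 + N.+1%:R *: z)) - E q (cN N *: z0).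
  by rewrite scalerDr scalerA /cN mulVf // scale1r E_add addrAC subrr add0r.
rewrite -d_sub; apply: le_lt_trans (d_tri _ 0 _) _.
have := hA1 q; have := hA0 q; rewrite (d_sym 0).
rewrite /eta; set a := d _ _; set b := d _ _; lra.
Qed.


Lemma lower_bound (yj c : K) : 0 < `|yj| -> `|yj - c| < `|yj| / 2 -> `|yj| / 2 < `|c|.
Proof.
move=> y0 h.
have h1 : `|yj| <= `|yj - c| + `|c| by rewrite -{1}(subrK c yj) ler_normD.
have h2 : `|yj| < `|yj| / 2 + `|c| by apply: le_lt_trans h1 _; rewrite ltrD2r.
by rewrite {1}(splitr `|yj|) ltrD2l in h2.
Qed.

Lemma inv_bound (kr c cj yj : K) : kr != 0 -> kr * c = cj -> 0 < `|yj| -> `|yj| / 2 < `|cj| ->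
  c != 0 /\ `|c^-1| <= `|kr| / (`|yj| / 2).
Proof.
move=> kr0 hc y0 hcj.
have cj0 : 0 < `|cj| by apply: lt_trans hcj; rewrite divr_gt0.
have c0 : c != 0.
  by apply/eqP => c0; move: cj0; rewrite -hc c0 mulr0 normr0 ltxx.
split => //.
have -> : c = cj / kr by rewrite -hc mulrC mulKf.
rewrite invf_div normf_div ler_pM2l ?normr_gt0 //.
by rewrite lef_pV2 ?posrE ?divr_gt0 // ltW.
Qed.

Lemma SI (x y : X) (j : int) (hj : coord j y != 0)
 (hx : forall U, nbhs y U -> forall N : nat, exists n : nat, (N <= n)%N /\ U (iter n B x))
 (r : nat) (del : R) (del0 : 0 < del) :
 exists m s, [/\ iter m B s = e (j + r%:Z), d s 0 < del & d (iter m B (e (j + r%:Z))) 0 < del].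
Proof.
have orbit : forall rho, 0 < rho -> forall N : nat, exists n, (N <= n)%N /\ d y (iter n B x) < rho.
  move=> rho rho0 N.
  have nU : nbhs y [set z | d y z < rho] by apply/d_nbhs; exists rho.
  exact: hx nU N.
set J := j + r%:Z.
set yj := coord j y.
have yj0 : 0 < `|yj| by rewrite normr_gt0.
have yj20 : 0 < `|yj| / 2 by rewrite divr_gt0.
have [del0' del00' Hd0] := @cont_dK (coord j) y (coord_cont j y) _ yj20.
have lowb : forall z, d y z < del0' -> `|yj| / 2 < `|coord j z|.
  by move=> z /Hd0; apply: lower_bound.
set kr := kap j r.
have kr0 : kr != 0 by apply: kap_nz.
have hkr : forall z, coord j (iter r B z) = kr * coord J z by move=> z; rewrite coord_iter.
pose M := `|kr| / (`|yj| / 2).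
have M0 : 0 < M by rewrite divr_gt0 // normr_gt0.
have [del1 del10 Hdel1] := @scale_bal M del M0 del0.
have del120 : 0 < del1 / 2 by rewrite divr_gt0.
have [F0 HF0] := @tail y _ del120.
have [del2 del20 Hdel2] := @EQ _ del120.
have [q0 [q0r Hq0]] := orbit _ del00' (2 * r)%N.
pose p := (q0 - 2 * r)%N.
have [F1 HF1] := @tail (iter p B x) _ del10.
have [Nb0 HNb0] := seq_bound F0.
have [Nb1 HNb1] := seq_bound F1.
have mind0 : 0 < Num.min del0' del2 by rewrite lt_min del00' del20.
have [n [nN Hn]] := orbit _ mind0 (q0 + Nb0 + Nb1 + absz J)%N.
move: Hn; rewrite lt_min => /andP [Hn0 Hn2].
have [rn rq0 e1 e2 e3] := @natfacts n q0 r Nb0 Nb1 (absz J) q0r nN.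
pose m := (n - q0 + r)%N.
exists m.
pose c := coord J (iter (n - r) B x).
have hc : kr * c = coord j (iter n B x).
  by rewrite -hkr -iterD subnKC.
have [c0 cM] := @inv_bound kr c _ yj kr0 hc yj0 (lowb _ Hn0).
exists (c^-1 *: E (J + m%:Z) (iter p B x)); split.
- rewrite iterB_scale BE -iterD.
  rewrite /m /p e1.
  by rewrite /E -/c scalerA mulVf // scale1r.
- apply: Hdel1 => //; apply: HF1; apply: notin_plus HNb1 _.
  by apply: leq_trans e3; rewrite -addnA leq_addl.
pose c' := coord J (iter (q0 - r) B x).
have hc' : kr * c' = coord j (iter q0 B x).
  by rewrite -hkr -iterD subnKC.
have [c0' cM'] := @inv_bound kr c' _ yj kr0 hc' yj0 (lowb _ Hq0).
have eJ : e J = c'^-1 *: E J (iter (q0 - r) B x) by rewrite /E -/c' scalerA mulVf // scale1r.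
rewrite eJ iterB_scale.
have -> : J = (J - m%:Z) + m%:Z by rewrite subrK.
rewrite BE -iterD.
rewrite /m e2.
apply: Hdel1 => //.
have -> : E (J - m%:Z) (iter n B x) = E (J - m%:Z) y + E (J - m%:Z) (iter n B x - y).
  by rewrite E_sub (addrC (E (J - m%:Z) y)) subrK.
apply: le_lt_trans (d_addl _ _) _; rewrite [del1]splitr ltrD //.
  apply: HF0; apply: notin_minus HNb0 _.
  by apply: leq_trans e3; rewrite -addnA leq_add2l leq_addl.
by apply: Hdel2; rewrite -d_sub d_sym.
Qed.


Lemma smallc_ext L1 L2 : (forall u, L1 u = L2 u) -> smallc L1 -> smallc L2.
Proof. by move=> h h1 eps /h1 [del del0 H]; exists del => // u; rewrite -h; apply: H. Qed.

Definition Lsum (s : seq int) (a : X) (J : int) (v : X) :=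
  \sum_(q <- s) (coord q a / kap q (absz (J - q))) *: iter (absz (J - q)) B v.

Lemma Lsum_e s a J : (forall q, q \in s -> q <= J) -> Lsum s a J (e J) = \sum_(q <- s) E q a.
Proof.
rewrite /Lsum; elim: s => [|q s IH] hs; first by rewrite !big_nil.
rewrite !big_cons IH; last by move=> q' hq'; apply: hs; rewrite inE hq' orbT.
congr (_ + _).
have hq : q <= J by apply: hs; rewrite inE eqxx.
rewrite -{3}(@absJ q J hq) Be scalerA mulfVK //; exact: kap_nz.
Qed.

Lemma Lsum_iter s a J m v : iter m B (Lsum s a J v) = Lsum s a J (iter m B v).
Proof.
rewrite /Lsum; elim: s => [|q s IH]; first by rewrite !big_nil iterB0.
by rewrite !big_cons iterB_add IH iterB_scale iterB_comm.
Qed.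

Lemma smallc_Lsum s a J : smallc (Lsum s a J).
Proof.
rewrite /Lsum; elim: s => [|q s IH].
  have h := smallc0; move: h; apply: smallc_ext => u; by rewrite big_nil.
have h := @smallc_add _ _ (@smallc_scale (coord q a / kap q (absz (J - q))) _ (smallc_iter (absz (J - q)))) IH.
move: h; apply: smallc_ext => u.
by rewrite big_cons.
Qed.

Variables (x y : X) (j : int).
Hypothesis hj : coord j y != 0.
Hypothesis hx : forall U, nbhs y U -> forall N : nat, exists n : nat, (N <= n)%N /\ U (iter n B x).

Lemma TRfin (su sv : seq int) (a b : X) eps : 0 < eps ->
  exists m z, d (\sum_(q <- su) E q a) z < eps /\ d (\sum_(q <- sv) E q b) (iter m B z) < eps.
Proof.
move=> eps0.
have [Nb HNb] := seq_bound (su ++ sv).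
pose r := (Nb + absz j)%N; pose J := j + r%:Z.
have hJu : forall q, q \in su -> q <= J.
  by move=> q hq; apply: le_J; apply: HNb; rewrite mem_cat hq.
have hJv : forall q, q \in sv -> q <= J.
  by move=> q hq; apply: le_J; apply: HNb; rewrite mem_cat hq orbT.
have [du du0 Hu] := smallc_Lsum su a J _ eps0.
have [dv dv0 Hv] := smallc_Lsum sv b J _ eps0.
have dm0 : 0 < Num.min du dv by rewrite lt_min du0 dv0.
have [m [s [Hs1 Hs2 Hs3]]] := @SI x y j hj hx r _ dm0.
move: Hs2 Hs3; rewrite !lt_min => /andP [s2u s2v] /andP [s3u s3v].
exists m, (\sum_(q <- su) E q a + Lsum sv b J s); split.
  rewrite -{1}(add0r (\sum_(q <- su) E q a)) [_ + Lsum _ _ _ _]addrC d_tr d_sym.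
  exact: Hv.
rewrite iterB_add Lsum_iter Hs1 (@Lsum_e sv b J hJv) -(@Lsum_e su a J hJu) Lsum_iter.
rewrite -[X in d X _](add0r (\sum_(q <- sv) E q b)) d_tr d_sym.
exact: Hu.
Qed.

Lemma TR (u v : X) eps : 0 < eps -> exists m z, d u z < eps /\ d v (iter m B z) < eps.
Proof.
move=> eps0; have eps20 : 0 < eps / 2 by rewrite divr_gt0.
have [Fu HFu] := @approxP u _ eps20.
have [Fv HFv] := @approxP v _ eps20.
have [m [z [h1 h2]]] := @TRfin Fu Fv u v _ eps20.
exists m, z; split.
  by apply: le_lt_trans (d_tri _ (\sum_(n <- Fu) E n u) _) _; rewrite [eps]splitr ltrD.
by apply: le_lt_trans (d_tri _ (\sum_(n <- Fv) E n v) _) _; rewrite [eps]splitr ltrD.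
Qed.


Variable f : nat -> K.
Hypothesis K_dense : forall (t th : K), 0 < th -> exists b, `|t - f b| < th.

Definition Dseq (a : nat) : X :=
  if @choice.unpickle (seq (int * nat)) a is Some s then \sum_(p <- s) f p.2 *: e p.1 else 0.

Lemma approx_list z (l : seq int) eps : 0 < eps ->
  exists s : seq (int * nat), d (\sum_(q <- l) E q z) (\sum_(p <- s) f p.2 *: e p.1) < eps.
Proof.
elim: l eps => [|q l IH] eps eps0.
  by exists [::]; rewrite !big_nil d_refl.
have eps20 : 0 < eps / 2 by rewrite divr_gt0.
have [s Hs] := IH _ eps20.
have [th th0 Hth] := @scale_vec (e q) (coord q z) _ eps20.
have [b Hb] := K_dense (coord q z) th th0.
exists ((q, b) :: s); rewrite !big_cons /=.
apply: le_lt_trans (d_add2 _ _ _ _) _.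
by rewrite [eps]splitr ltrD // /E; apply: Hth.
Qed.

Lemma D_dense z eps : 0 < eps -> exists a, d z (Dseq a) < eps.
Proof.
move=> eps0; have eps20 : 0 < eps / 2 by rewrite divr_gt0.
have [F HF] := @approxP z _ eps20.
have [s Hs] := @approx_list z F _ eps20.
exists (choice.pickle s); rewrite /Dseq choice.pickleK.
by apply: le_lt_trans (d_tri _ (\sum_(n <- F) E n z) _) _; rewrite [eps]splitr ltrD.
Qed.

Definition Ok (k : nat) : set X :=
  if @choice.unpickle (nat * nat)%type k is Some ab then
    [set z | exists m, d (Dseq ab.1) (iter m B z) < (ab.2.+1%:R)^-1] else setT.

Lemma hyper : exists zeta, dense (range (fun n : nat => iter n B zeta)).
Proof.
have Oopen : forall k z, Ok k z -> exists2 rho, 0 < rho & forall u, d z u < rho -> Ok k u.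
  move=> k z; rewrite /Ok; case: (choice.unpickle k) => [[a b]|]; last by exists 1.
  move=> /= [m hm].
  have gap0 : 0 < (b.+1%:R)^-1 - d (Dseq a) (iter m B z) by rewrite subr_gt0.
  have [del del0 Hdel] := smallc_iter m _ gap0.
  exists del => // u hy; exists m.
  have h1 : d (iter m B z) (iter m B u) < (b.+1%:R)^-1 - d (Dseq a) (iter m B z).
    by rewrite d_sub -iterB_sub; apply: Hdel; rewrite -d_sub.
  apply: le_lt_trans (d_tri _ (iter m B z) _) _.
  by rewrite -ltrBrDl.
have Odense : forall k z rho, 0 < rho -> exists u, d z u < rho /\ Ok k u.
  move=> k z rho rho0; rewrite /Ok; case: (choice.unpickle k) => [[a b]|]; last first.
    by exists z; rewrite d_refl.
  have mb0 : 0 < Num.min rho (b.+1%:R)^-1 by rewrite lt_min rho0 invr_gt0 ltr0Sn.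
  have [m [u [h1 h2]]] := @TR z (Dseq a) _ mb0.
  move: h1 h2; rewrite !lt_min => /andP [h1 _] /andP [_ h2].
  by exists u; split => //; exists m.
have [zeta Hz] := @baire Ok Oopen Odense.
exists zeta => O [z Oz] oO.
have nO : nbhs z O by apply: open_nbhs_nbhs; split.
move/d_nbhs: nO => [eps eps0 Heps].
have eps20 : 0 < eps / 2 by rewrite divr_gt0.
have [a Ha] := @D_dense z _ eps20.
have [b Hb] := @arch_inv _ eps20.
have := Hz (choice.pickle (a, b)); rewrite /Ok choice.pickleK /= => [[m hm]].
exists (iter m B zeta); split; last by exists m.
apply: Heps => /=.
apply: le_lt_trans (d_tri _ (Dseq a) _) _; rewrite [eps]splitr ltrD //.
exact: lt_trans hm Hb.
Qed.

End Core.

Lemma core (R : realType) (K : numFieldType) (f : nat -> K) :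
  (forall th : K, 0 < th -> exists N : nat, (N.+1%:R)^-1 < th) ->
  (forall t th : K, 0 < th -> exists b, `|t - f b| < th) -> corollary3p2_stmt R K.
Proof.
move=> Karch Kdense X coord e w B [[d [[d0 deq dsym dtri dtr] dn dc]] cinj ccont] [ecoord bas] wnz [Bc Bcoord] [x [y [y0 hx]]].
have [j hj] : exists j, coord j y != 0.
  apply/not_existsP => H; move/eqP: y0; apply; apply: cinj => n.
  by rewrite linear0; apply/eqP/negPn/negP; apply: H.
have [z hz] := @hyper R K X d deq dsym dtri dtr dn coord e w B cinj ccont ecoord bas wnz Bc Bcoord dc Karch x y j hj hx f Kdense.
by exists z.
Qed.

Lemma rat_approx (R : realType) (a eps : R) : 0 < eps -> exists q : rat, `|a - ratr q| < eps.
Proof.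
move=> e0.
have [y [By [q _ hq]]] := @dense_rat R (ball a eps) (ex_intro _ a (ballxx a e0)) (ball_open a eps).
by exists q; rewrite hq; move: By; rewrite -ball_normE.
Qed.

Definition fR (R : realType) (b : nat) : R :=
  if @choice.unpickle rat b is Some q then ratr q else 0.

Lemma corR (R : realType) : corollary3p2_stmt R R.
Proof.
apply: (@core R R (@fR R)).
  by move=> th th0; apply: arch_inv.
move=> t th th0; have [q hq] := @rat_approx _ t th th0.
by exists (choice.pickle q); rewrite /fR choice.pickleK.
Qed.

Local Open Scope complex_scope.

Definition fC (R : realType) (b : nat) : R[i] :=
  if @choice.unpickle (rat * rat)%type b is Some qq then (ratr qq.1) +i* (ratr qq.2) else 0.

Lemma corC (R : realType) : corollary3p2_stmt R R[i].
Proof.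
apply: (@core R R[i] (@fC R)).
  move=> [a b]; rewrite ltcE /= => /andP [/eqP b0 a0]; subst b.
  have [N HN] := @arch_inv _ a a0.
  exists N; rewrite ltcE /=.
  have -> : (N.+1%:R : R[i])^-1 = ((N.+1%:R)^-1 : R)%:C by rewrite fmorphV rmorph_nat.
  by rewrite /= eqxx HN.
move=> [a b] [th thi]; rewrite ltcE /= => /andP [/eqP thi0 th0]; subst thi.
have th20 : 0 < th / 2 by rewrite divr_gt0.
have [q1 hq1] := @rat_approx _ a _ th20.
have [q2 hq2] := @rat_approx _ b _ th20.
exists (choice.pickle (q1, q2)); rewrite /fC choice.pickleK /=.
rewrite normc_def /= -complexr0 ltcR.
rewrite -[ltRHS](@ger0_norm _ th) ?ltW // -sqrtr_sqr ltr_sqrt ?exprn_gt0 //.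
move: hq1 hq2; rewrite !ltr_norml.
set u := a - ratr q1; set v := b - ratr q2.
move=> /andP [h1 h2] /andP [h3 h4].
nra.
Qed.

Theorem corollary3p2 (R : realType) :
  corollary3p2_stmt R R /\ corollary3p2_stmt R R[i].
Proof. by split; [apply: corR | apply: corC]. Qed.
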